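(* Let $\mathcal C$ be a pointed exact Mal'tsev category and let $(C_1,C_0,d,c,e)$ be a reflexive graph in $\mathcal C$. Then the pushout of $d$ and $c$ exists, and $(d,c)\colon C_1\to C_0\times C_0$ is an epimorphism if and only if this pushout $\pi_0(C)$ is a zero object. Moreover, in that case $(d,c)$ is a regular epimorphism.
   Context: A reflexive graph $(C_1,C_0,d,c,e)$ consists of morphisms $d,c\colon C_1\to C_0$ and $e\colon C_0\to C_1$ with $d\circ e=c\circ e=1_{C_0}$. A Mal'tsev category is a finitely complete category in which every reflexive relation is an equivalence relation; exact means Barr-exact. *)

(* Defs.v *)
Record Category : Type := {
  Ob :> Type;
  Hom : Ob -> Ob -> Type;
  idm : forall X, Hom X X;
  comp : forall {X Y Z}, Hom Y Z -> Hom X Y -> Hom X Z;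
  comp_assoc : forall X Y Z W (h : Hom Z W) (g : Hom Y Z) (f : Hom X Y),
      comp h (comp g f) = comp (comp h g) f;
  comp_id_l : forall X Y (f : Hom X Y), comp (idm Y) f = f;
  comp_id_r : forall X Y (f : Hom X Y), comp f (idm X) = f
}.

Arguments Hom {C} X Y : rename.
Arguments idm {C} X : rename.
Arguments comp {C X Y Z} g f : rename.

Section Notions.
Context {C : Category}.

Definition Mono {X Y : C} (f : Hom X Y) : Prop :=
  forall Z (a b : Hom Z X), comp f a = comp f b -> a = b.

Definition Epi {X Y : C} (f : Hom X Y) : Prop :=
  forall Z (a b : Hom Y Z), comp a f = comp b f -> a = b.

Definition IsTerminal (T : C) : Prop :=
  forall X : C, exists u : Hom X T, forall v : Hom X T, v = u.

Definition IsInitial (I : C) : Prop :=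
  forall X : C, exists u : Hom I X, forall v : Hom I X, v = u.

Definition IsZeroObject (Z : C) : Prop := IsInitial Z /\ IsTerminal Z.

Definition Pointed : Prop := exists Z : C, IsZeroObject Z.

Definition IsProduct {A B P : C} (p1 : Hom P A) (p2 : Hom P B) : Prop :=
  forall Z (a : Hom Z A) (b : Hom Z B),
    exists u : Hom Z P, (comp p1 u = a /\ comp p2 u = b) /\
      forall v : Hom Z P, comp p1 v = a -> comp p2 v = b -> v = u.

Definition IsPullback {A B X P : C} (f : Hom A X) (g : Hom B X)
    (p1 : Hom P A) (p2 : Hom P B) : Prop :=
  comp f p1 = comp g p2 /\
  forall Z (a : Hom Z A) (b : Hom Z B), comp f a = comp g b ->
    exists u : Hom Z P, (comp p1 u = a /\ comp p2 u = b) /\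
      forall v : Hom Z P, comp p1 v = a -> comp p2 v = b -> v = u.

Definition IsPushout {X A B Q : C} (f : Hom X A) (g : Hom X B)
    (q1 : Hom A Q) (q2 : Hom B Q) : Prop :=
  comp q1 f = comp q2 g /\
  forall Z (a : Hom A Z) (b : Hom B Z), comp a f = comp b g ->
    exists u : Hom Q Z, (comp u q1 = a /\ comp u q2 = b) /\
      forall v : Hom Q Z, comp v q1 = a -> comp v q2 = b -> v = u.

Definition IsCoequalizer {X Y Q : C} (f g : Hom X Y) (q : Hom Y Q) : Prop :=
  comp q f = comp q g /\
  forall Z (a : Hom Y Z), comp a f = comp a g ->
    exists u : Hom Q Z, comp u q = a /\
      forall v : Hom Q Z, comp v q = a -> v = u.

Definition RegularEpi {Y Q : C} (q : Hom Y Q) : Prop :=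
  exists (X : C) (f g : Hom X Y), IsCoequalizer f g q.

Definition FinitelyComplete : Prop :=
  (exists T : C, IsTerminal T) /\
  forall (A B X : C) (f : Hom A X) (g : Hom B X),
    exists (P : C) (p1 : Hom P A) (p2 : Hom P B), IsPullback f g p1 p2.

(* Internal relations on X: jointly monic pairs r1, r2 : R -> X *)
Definition IsRelation {R X : C} (r1 r2 : Hom R X) : Prop :=
  forall Z (a b : Hom Z R), comp r1 a = comp r1 b -> comp r2 a = comp r2 b -> a = b.

Definition Reflexive {R X : C} (r1 r2 : Hom R X) : Prop :=
  exists s : Hom X R, comp r1 s = idm X /\ comp r2 s = idm X.

Definition Symmetric {R X : C} (r1 r2 : Hom R X) : Prop :=
  exists t : Hom R R, comp r1 t = r2 /\ comp r2 t = r1.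

Definition Transitive {R X : C} (r1 r2 : Hom R X) : Prop :=
  forall (P : C) (p1 p2 : Hom P R), IsPullback r2 r1 p1 p2 ->
    exists m : Hom P R, comp r1 m = comp r1 p1 /\ comp r2 m = comp r2 p2.

Definition EquivalenceRelation {R X : C} (r1 r2 : Hom R X) : Prop :=
  IsRelation r1 r2 /\ Reflexive r1 r2 /\ Symmetric r1 r2 /\ Transitive r1 r2.

Definition Maltsev : Prop :=
  FinitelyComplete /\
  forall (R X : C) (r1 r2 : Hom R X),
    IsRelation r1 r2 -> Reflexive r1 r2 -> EquivalenceRelation r1 r2.

Definition Regular : Prop :=
  FinitelyComplete /\
  (forall (X Y R : C) (f : Hom X Y) (r1 r2 : Hom R X),
      IsPullback f f r1 r2 -> exists (Q : C) (q : Hom X Q), IsCoequalizer r1 r2 q) /\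
  (forall (A B D P : C) (f : Hom A B) (g : Hom D B) (p1 : Hom P D) (p2 : Hom P A),
      RegularEpi f -> IsPullback g f p1 p2 -> RegularEpi p1).

Definition Exact : Prop :=
  Regular /\
  forall (R X : C) (r1 r2 : Hom R X), EquivalenceRelation r1 r2 ->
    exists (Y : C) (f : Hom X Y), IsPullback f f r1 r2.

End Notions.

(* Main.v *)
Require Import Defs.

Section Aux.
Context {C : Category}.

Ltac assoc := repeat rewrite comp_assoc.

Lemma regepi_epi {Y Q : C} (q : Hom Y Q) : RegularEpi q -> Epi q.
Proof.
  intros (X & f & g & Hc & Hu) Z a b Hab.
  destruct (Hu Z (comp a q)) as (u & Hu1 & Hu2).
  { rewrite <- !comp_assoc, Hc. reflexivity. }
  rewrite (Hu2 a eq_refl). symmetry. apply Hu2. symmetry; exact Hab.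
Qed.

Lemma image_fact : Regular (C := C) -> forall (X P : C) (h : Hom X P),
  exists (I : C) (m : Hom X I) (n : Hom I P), RegularEpi m /\ Mono n /\ comp n m = h.
Proof.
  intros [[_ Hpb] [Hcoeq Hstab]] X P h.
  destruct (Hpb X X P h h) as (K & k1 & k2 & HK).
  destruct (Hcoeq X P K h k1 k2 HK) as (I & m & Hm).
  destruct Hm as [Hmk Hmu].
  destruct (Hmu P h (proj1 HK)) as (n & Hnm & _).
  exists I, m, n.
  assert (Rm : RegularEpi m) by (exists K, k1, k2; split; assumption).
  split; [exact Rm|]. split; [|exact Hnm].
  intros Z x y Hxy.
  destruct (Hpb Z X I x m) as (A & a1 & a2 & HA).
  pose proof (Hstab X I Z A m x a1 a2 Rm HA) as Ra1.
  destruct (Hpb A X I (comp y a1) m) as (B & b1 & b2 & HB).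
  pose proof (Hstab X I A B m (comp y a1) b1 b2 Rm HB) as Rb1.
  assert (E1 : comp h (comp a2 b1) = comp h b2).
  { rewrite <- Hnm. rewrite <- !comp_assoc.
    rewrite (comp_assoc _ _ _ _ _ m a2 b1), <- (proj1 HA).
    rewrite !comp_assoc, Hxy. rewrite <- !comp_assoc.
    rewrite (comp_assoc _ _ _ _ _ y a1 b1), (proj1 HB). reflexivity. }
  destruct (proj2 HK B (comp a2 b1) b2 E1) as (t & [Ht1 Ht2] & _).
  assert (E2 : comp m (comp a2 b1) = comp m b2).
  { rewrite <- Ht1, <- Ht2. rewrite !comp_assoc, Hmk. reflexivity. }
  assert (E3 : comp (comp x a1) b1 = comp (comp y a1) b1).
  { rewrite (proj1 HA), (proj1 HB). rewrite <- comp_assoc. exact E2. }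
  apply (regepi_epi _ Ra1). apply (regepi_epi _ Rb1). exact E3.
Qed.

Lemma prod_iso {A B P R : C} (p1 : Hom P A) (p2 : Hom P B) (r1 : Hom R A) (r2 : Hom R B)
  (n : Hom R P) : IsProduct p1 p2 -> IsProduct r1 r2 -> comp p1 n = r1 -> comp p2 n = r2 ->
  exists g : Hom P R, comp n g = idm P /\ comp g n = idm R.
Proof.
  intros HP HR E1 E2.
  destruct (HR P p1 p2) as (g & [G1 G2] & _).
  exists g. split.
  - destruct (HP P p1 p2) as (u & _ & Hu).
    rewrite (Hu (comp n g)), (Hu (idm P)); try reflexivity.
    all: rewrite ?comp_id_r, ?comp_assoc, ?E1, ?E2, ?G1, ?G2, ?E1, ?E2; reflexivity.
  - destruct (HR R r1 r2) as (u & _ & Hu).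
    rewrite (Hu (comp g n)), (Hu (idm R)); try reflexivity.
    all: rewrite ?comp_id_r, ?comp_assoc, ?E1, ?E2, ?G1, ?G2, ?E1, ?E2; reflexivity.
Qed.

Lemma regepi_iso {X I P : C} (m : Hom X I) (n : Hom I P) (g : Hom P I) :
  RegularEpi m -> comp n g = idm P -> comp g n = idm I -> RegularEpi (comp n m).
Proof.
  intros (W & f1 & f2 & Hc & Hu) E1 E2.
  exists W, f1, f2. split.
  - rewrite <- !comp_assoc, Hc. reflexivity.
  - intros Z a Ha. destruct (Hu Z a Ha) as (u & Hu1 & Hu2).
    exists (comp u g). split.
    + rewrite <- comp_assoc, (comp_assoc _ _ _ _ _ g n m), E2, comp_id_l. exact Hu1.
    + intros v Hv. rewrite <- (Hu2 (comp v n)).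
      * rewrite <- comp_assoc, E1, comp_id_r. reflexivity.
      * rewrite <- comp_assoc. exact Hv.
Qed.

Lemma pushout_eq {C1 C0 Q : C} (d c : Hom C1 C0) (e : Hom C0 C1) (q1 q2 : Hom C0 Q) :
  comp d e = idm C0 -> comp c e = idm C0 -> IsPushout d c q1 q2 -> q1 = q2.
Proof.
  intros Hd Hc [Hq _].
  rewrite <- (comp_id_r _ _ _ q1), <- Hd, comp_assoc, Hq, <- comp_assoc, Hc, comp_id_r.
  reflexivity.
Qed.

Lemma pushout_epi {C1 C0 Q : C} (d c : Hom C1 C0) (e : Hom C0 C1) (q1 q2 : Hom C0 Q) :
  comp d e = idm C0 -> comp c e = idm C0 -> IsPushout d c q1 q2 -> Epi q1.
Proof.
  intros Hd Hc HQ Z a b Hab.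
  pose proof (pushout_eq d c e q1 q2 Hd Hc HQ) as Eq. subst q2.
  destruct HQ as [Hq Hu].
  destruct (Hu Z (comp a q1) (comp a q1)) as (u & _ & Hu2).
  { rewrite <- !comp_assoc, Hq. reflexivity. }
  rewrite (Hu2 a eq_refl eq_refl). symmetry. apply Hu2; symmetry; exact Hab.
Qed.


Lemma prod_exists : FinitelyComplete (C := C) -> forall A B : C,
  exists (P : C) (p1 : Hom P A) (p2 : Hom P B), IsProduct p1 p2.
Proof.
  intros [[T HT] Hpb] A B.
  destruct (HT A) as (tA & _). destruct (HT B) as (tB & _).
  destruct (Hpb A B T tA tB) as (P & p1 & p2 & [_ HP]).
  exists P, p1, p2. intros Z a b. apply HP.
  destruct (HT Z) as (tZ & HtZ). rewrite (HtZ (comp tA a)), (HtZ (comp tB b)). reflexivity.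
Qed.

Lemma key : Exact (C := C) -> Maltsev (C := C) ->
  forall (C1 C0 P : C) (d c : Hom C1 C0) (e : Hom C0 C1) (p1 p2 : Hom P C0) (h : Hom C1 P),
  comp d e = idm C0 -> comp c e = idm C0 -> IsProduct p1 p2 ->
  comp p1 h = d -> comp p2 h = c ->
  exists (I : C) (m : Hom C1 I) (n : Hom I P) (Y : C) (f : Hom C0 Y),
    RegularEpi m /\ comp n m = h /\ IsPullback f f (comp p1 n) (comp p2 n).
Proof.
  intros [HReg Heff] [_ HMal] C1 C0 P d c e p1 p2 h Hd Hc HP Hh1 Hh2.
  destruct (image_fact HReg C1 P h) as (I & m & n & Rm & Mn & Hnm).
  assert (Rel : IsRelation (comp p1 n) (comp p2 n)).
  { intros W a b E1 E2. apply Mn.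
    destruct (HP W (comp (comp p1 n) a) (comp (comp p2 n) a)) as (u & _ & Hu).
    rewrite (Hu (comp n a)), (Hu (comp n b)); try reflexivity;
      rewrite ?comp_assoc; auto. }
  assert (Rfl : Reflexive (comp p1 n) (comp p2 n)).
  { exists (comp m e). split.
    - rewrite <- comp_assoc, (comp_assoc _ _ _ _ _ n m e), Hnm, comp_assoc, Hh1. exact Hd.
    - rewrite <- comp_assoc, (comp_assoc _ _ _ _ _ n m e), Hnm, comp_assoc, Hh2. exact Hc. }
  destruct (Heff _ _ _ _ (HMal _ _ _ _ Rel Rfl)) as (Y & f & Hf).
  exists I, m, n, Y, f. auto.
Qed.
End Aux.

Theorem mainTheorem7 (C : Category) :
  Pointed (C := C) -> Exact (C := C) -> Maltsev (C := C) ->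
  forall (C1 C0 : C) (d c : Hom C1 C0) (e : Hom C0 C1),
    comp d e = idm C0 -> comp c e = idm C0 ->
    (exists (Q : C) (q1 q2 : Hom C0 Q), IsPushout d c q1 q2) /\
    (forall (Q : C) (q1 q2 : Hom C0 Q), IsPushout d c q1 q2 ->
     forall (P : C) (p1 p2 : Hom P C0), IsProduct p1 p2 ->
     forall h : Hom C1 P, comp p1 h = d -> comp p2 h = c ->
       (Epi h <-> IsZeroObject Q) /\ (Epi h -> RegularEpi h)).
Proof.
  intros [Z [HZi HZt]] HEx HM C1 C0 d c e Hd Hc.
  pose proof HEx as [HReg Heff]. pose proof HM as [HFC HMal].
  split.
  - destruct (prod_exists HFC C0 C0) as (P & p1 & p2 & HP).
    destruct (HP C1 d c) as (h & [Hh1 Hh2] & _).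
    destruct (key HEx HM C1 C0 P d c e p1 p2 h Hd Hc HP Hh1 Hh2)
      as (I & m & n & Y & f & Rm & Hnm & Hf).
    destruct HReg as [_ [Hcoeq _]].
    destruct (Hcoeq _ _ _ _ _ _ Hf) as (Q & q & [Hq Hqu]).
    assert (Ed : d = comp (comp p1 n) m) by (rewrite <- comp_assoc, Hnm; auto).
    assert (Ec : c = comp (comp p2 n) m) by (rewrite <- comp_assoc, Hnm; auto).
    exists Q, q, q. split.
    + rewrite Ed, Ec, !(comp_assoc _ _ _ _ _ q _ m), Hq. reflexivity.
    + intros W a b Hab.
      assert (Eab : a = b).
      { rewrite <- (comp_id_r _ _ _ a), <- Hd, comp_assoc, Hab, <- comp_assoc, Hc, comp_id_r.
        reflexivity. }
      subst b.
      destruct (Hqu W a) as (u & Hu1 & Hu2).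
      { apply (regepi_epi _ Rm). rewrite <- !comp_assoc, Hnm, Hh1, Hh2. exact Hab. }
      exists u. split; [split; exact Hu1|]. intros v Hv _. apply Hu2; exact Hv.
  - intros Q q1 q2 HQ P p1 p2 HP h Hh1 Hh2.
    destruct (key HEx HM C1 C0 P d c e p1 p2 h Hd Hc HP Hh1 Hh2)
      as (I & m & n & Y & f & Rm & Hnm & Hf).
    pose proof (pushout_eq d c e q1 q2 Hd Hc HQ) as E12.
    pose proof (pushout_epi d c e q1 q2 Hd Hc HQ) as Eq1.
    assert (back : IsZeroObject Q -> RegularEpi h).
    { intros [HQi HQt].
      assert (Efdc : comp f d = comp f c).
      { rewrite <- Hh1, <- Hh2, <- Hnm, !comp_assoc.
        rewrite <- (comp_assoc _ _ _ _ _ f p1 n), <- (comp_assoc _ _ _ _ _ f p2 n), (proj1 Hf).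
        reflexivity. }
      destruct (proj2 HQ Y f f Efdc) as (u & [Hu1 _] & _).
      assert (HR : IsProduct (comp p1 n) (comp p2 n)).
      { intros W a b. apply (proj2 Hf).
        destruct (HQt W) as (tW & HtW).
        rewrite <- Hu1, <- !comp_assoc, (HtW (comp q1 a)), (HtW (comp q1 b)). reflexivity. }
      destruct (prod_iso p1 p2 (comp p1 n) (comp p2 n) n HP HR eq_refl eq_refl)
        as (g & G1 & G2).
      rewrite <- Hnm. exact (regepi_iso m n g Rm G1 G2). }
    assert (forw : Epi h -> IsZeroObject Q).
    { intros Eh. subst q2.
      destruct (HZt C0) as (tC0 & HtC0). destruct (HZi C0) as (zC0 & _).
      destruct (HP C0 (idm C0) (comp zC0 tC0)) as (j & [Hj1 Hj2] & _).
      assert (E : comp q1 p1 = comp q1 p2).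
      { apply Eh. rewrite <- !comp_assoc, Hh1, Hh2. exact (proj1 HQ). }
      assert (Hw : exists w : Hom Z Q, q1 = comp w tC0).
      { exists (comp q1 zC0). rewrite <- comp_assoc, <- Hj2, comp_assoc, <- E,
          <- comp_assoc, Hj1, comp_id_r. reflexivity. }
      destruct Hw as (w & Hq).
      destruct (HZt Q) as (sQ & HsQ).
      destruct (HZi Z) as (uZ & HuZ).
      assert (Esw : comp sQ w = idm Z) by (rewrite (HuZ (comp sQ w)), (HuZ (idm Z)); reflexivity).
      assert (Ews : comp w sQ = idm Q).
      { apply Eq1. rewrite comp_id_l. transitivity (comp (comp w sQ) (comp w tC0)); [rewrite <- Hq; reflexivity|].
        rewrite <- comp_assoc, (comp_assoc _ _ _ _ _ sQ w tC0), Esw, comp_id_l.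
        symmetry; exact Hq. }
      split.
      - intros X. destruct (HZi X) as (zX & HzX).
        exists (comp zX sQ). intros v. apply Eq1. rewrite Hq, !comp_assoc.
        rewrite (HzX (comp v w)), (HzX (comp (comp zX sQ) w)). reflexivity.
      - intros X. destruct (HZt X) as (tX & HtX).
        exists (comp w tX). intros v.
        rewrite <- (comp_id_l _ _ _ v), <- Ews, <- comp_assoc, (HtX (comp sQ v)). reflexivity. }
    split; [split|].
    + exact forw.
    + intros HZQ. apply regepi_epi, back, HZQ.
    + intros Eh. apply back, forw, Eh.
Qed.
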